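(* Let $\mathcal{Y}$ be a measurable space, $\{Y_t\}_{t\ge0}$ a Markov chain on $\mathcal{Y}$ with transition kernel $P$, $H:\mathbb{R}^d\times\mathcal{Y}\to\mathbb{R}^d$, $h(w)\doteq\mathbb{E}_{y\sim d_{\mathcal{Y}}}[H(w,y)]$, satisfying the standing assumptions (A1)–(A3) below, and let $w_*$ be the fixed point of $h$. Let $w_0\in\mathbb{R}^d$, $\nu\in(0,1)$, $C_\alpha>0$, and $w_{t+1}=w_t+\alpha_t(H(w_t,Y_{t+1})-w_t)$ with $\alpha_t=\frac{C_\alpha}{(t+3)\ln^{\nu}(t+3)}$. Suppose $C_\alpha\ge\bar C_\alpha$ and that $C,C'$ and the positive integer $K$ are deterministic constants such that for every $\delta\in(0,1)$, with probability at least $1-\delta$, for all $t\ge0$, $\|w_t-w_*\|^2\le a(t)\big[\log(1/\delta)+b(t)\big]^{K}$, where $$a(t)\doteq C\exp\Big(-\frac{\ln^{1-\nu}(t+1)}{1-\nu}\Big),\qquad b(t)\doteq C'+\frac{\ln^{1-\nu}(t+1)}{1-\nu}$$ (such constants $\bar C_\alpha, C, C', K$ exist by the concentration result for this algorithm). Then for any $p\ge 2$ and any $t\ge 0$, $$\mathbb{E}\big[\|w_t-w_*\|^{2p}\big]\le\big(a(t)\,b(t)^{K}\big)^p+K p\, a(t)^p\exp(b(t))\,\big((Kp)!\big).$$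
   Context: (A1) $\{Y_t\}$ has a unique stationary distribution $d_{\mathcal{Y}}$ and there exist $\varrho\in[0,1)$, $C_A$ with $\int_{\mathcal{Y}}|P^n(y,y')-d_{\mathcal{Y}}(y')|\,\mathrm{d}y'\le C_A\varrho^n$ for all $y$, $n$ ($P^n$ the $n$-step kernel). (A2) There are $\kappa\in[0,1)$ and a norm $\|\cdot\|$ with $\|h(w)-h(w')\|\le\kappa\|w-w'\|$; $w_*$ is the unique fixed point of $h$. (A3) There is $L_h<\infty$ with $\|H(w,y)-H(w',y)\|\le L_h\|w-w'\|$ for all $w,w',y$ and $\sup_y\|H(0,y)\|<\infty$. For a non-integer $x\ge0$, $x!$ is understood as $\Gamma(x+1)$. *)

(* Defs.v *)
From HB Require Import structures.
From mathcomp Require Import all_boot all_order all_algebra.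
From mathcomp Require Import all_classical all_reals all_analysis.
Set Implicit Arguments. Unset Strict Implicit. Unset Printing Implicit Defensive.
Import Order.TTheory GRing.Theory Num.Theory.
Local Open Scope classical_set_scope.
Local Open Scope ring_scope.

Definition is_norm (R : realType) (d : nat) (nrm : 'rV[R]_d -> R) : Prop :=
  [/\ forall x, 0 <= nrm x,
      forall x, nrm x = 0 -> x = 0,
      forall (a : R) x, nrm (a *: x) = `|a| * nrm x &
      forall x y, nrm (x + y) <= nrm x + nrm y].

Fixpoint nstep (R : realType) (dY : measure_display) (Y : measurableType dY)
  (P : R.-pker Y ~> Y) (n : nat) (y : Y) (B : set Y) : \bar R :=
  match n with
  | 0 => \d_y B
  | n'.+1 => (\int[P y]_z nstep P n' z B)%E
  end.

Definition stationary (R : realType) (dY : measure_display) (Y : measurableType dY)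
  (P : R.-pker Y ~> Y) (mu : probability Y R) : Prop :=
  forall B, measurable B -> (\int[mu]_y P y B)%E = mu B.

Definition markov_chain (R : realType) (d0 : measure_display) (Omega : measurableType d0)
  (Pr : probability Omega R) (dY : measure_display) (Y : measurableType dY)
  (Yc : nat -> Omega -> Y) (P : R.-pker Y ~> Y) : Prop :=
  (forall t, measurable_fun setT (Yc t)) /\
  forall (t : nat) (A : nat -> set Y) (B : set Y),
    (forall i, measurable (A i)) -> measurable B ->
    Pr ([set om | forall i, (i <= t)%N -> A i (Yc i om)] `&` [set om | B (Yc t.+1 om)])
    = (\int[Pr]_(om in [set om | forall i, (i <= t)%N -> A i (Yc i om)])
          P (Yc t om) B)%E.

Fixpoint sa_iter (R : realType) (d : nat) (Y : Type) (H : 'rV[R]_d -> Y -> 'rV[R]_d)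
  (alpha : nat -> R) (w0 : 'rV[R]_d) (Yc : nat -> Y) (t : nat) : 'rV[R]_d :=
  match t with
  | 0 => w0
  | t'.+1 => let w := sa_iter H alpha w0 Yc t' in
             w + alpha t' *: (H w (Yc t'.+1) - w)
  end.

Definition step_size (R : realType) (Calpha nu : R) (t : nat) : R :=
  Calpha / ((t + 3)%:R * powR (ln (t + 3)%:R) nu).

Definition a_fun (R : realType) (C nu : R) (t : nat) : R :=
  C * expR (- (powR (ln (t + 1)%:R) (1 - nu) / (1 - nu))).

Definition b_fun (R : realType) (C' nu : R) (t : nat) : R :=
  C' + powR (ln (t + 1)%:R) (1 - nu) / (1 - nu).

(* x! := Gamma(x+1) for real x >= 0 (Euler's integral), agreeing with the
   factorial on nonnegative integers. *)
Definition gamma_fact (R : realType) (x : R) : \bar R :=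
  (\int[@lebesgue_measure R]_(s in `[0%R, +oo[%classic) (powR s x * expR (- s))%:E)%E.

(* Main.v *)
Require Import Defs.
From HB Require Import structures.
From mathcomp Require Import all_boot all_order all_algebra.
From mathcomp Require Import all_classical all_reals all_analysis.
From mathcomp Require Import measurable_realfun.
From mathcomp Require Import ring lra.
Import Order.TTheory GRing.Theory Num.Theory.
Local Open Scope classical_set_scope.
Local Open Scope ring_scope.


Section RealLemmas.
Context {R : realType}.

Lemma wamgm (s w : R) : 0 < s <= 1 -> 0 < w -> powR w s <= s * w + (1 - s).
Proof.
move=> /andP[s0 s1] w0.
rewrite /powR gt_eqF //.
have := @convex_expR R (Itv01 (ltW s0) s1) (ln w) 0.
rewrite !convRE /= mulr0 addr0 expR0 mulr1 lnK //.
Qed.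

Lemma bernoulliR (q r : R) : 1 <= q -> 0 <= r <= 1 -> 1 - q * (1 - r) <= powR r q.
Proof.
move=> q1 /andP[r0 r1].
have q0 : 0 < q by lra.
set w := 1 - q * (1 - r).
have [w0|w0] := leP w 0; first by apply: le_trans w0 (powR_ge0 _ _).
have s01 : 0 < q^-1 <= 1 by rewrite invr_gt0 q0 /= invf_le1.
have h1 := @wamgm q^-1 w s01 w0.
have e2 : q^-1 * w + (1 - q^-1) = r.
  rewrite /w; field; exact: lt0r_neq0.
rewrite e2 in h1.
have e : w = powR (powR w q^-1) q.
  by rewrite -powRrM mulVf ?lt0r_neq0 // powRr1 // ltW.
rewrite e; apply: ge0_ler_powR => //; first exact: ltW.
  by rewrite nnegrE powR_ge0.
Qed.


Lemma diff_bound (q Z h : R) : 1 <= q -> 0 <= Z -> 0 < h ->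
  powR (Z + h) q - powR Z q <= q * h * powR (Z + h) q / (Z + h).
Proof.
move=> q1 Z0 h0.
have Y0 : 0 < Z + h by lra.
set Y := Z + h in Y0 *.
set r := Z / Y.
have r0 : 0 <= r by rewrite /r divr_ge0 // ltW.
have r1 : r <= 1 by rewrite /r ler_pdivrMr // mul1r /Y; lra.
have eZ : Z = Y * r by rewrite /r mulrC divfK // lt0r_neq0.
have hb := @bernoulliR q r q1 (introT andP (conj r0 r1)).
have e1 : 1 - r = h / Y by rewrite /r /Y; field; exact: lt0r_neq0.
rewrite e1 in hb.
rewrite [in X in _ - X]eZ powRM //; last exact: ltW.
have P0 : 0 <= powR Y q by exact: powR_ge0.
have -> : q * h * powR Y q / Y = powR Y q * (q * (h / Y)) by rewrite mulrA; field; exact: lt0r_neq0.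
rewrite -[X in X - _ <= _]mulr1 -mulrBr.
apply: ler_wpM2l => //; lra.
Qed.

Lemma e98 : expR (9 / 8 : R) <= 4.
Proof.
have e : expR (9 / 8 : R) = expR (9 / 64) ^+ 8.
  by rewrite -expRM_natl; congr expR; rewrite -[8%:R]/(8 : R); field.
have x1 : expR (- (9 / 64 : R)) >= 1 + - (9 / 64) by exact: expR_ge1Dx.
have x0 := @expR_gt0 R (9/64).
have xx : expR (9 / 64 : R) * expR (- (9 / 64)) = 1 by rewrite expRxMexpNx_1.
set x := expR (9 / 64 : R) in e x0 xx *.
set y := expR (- (9 / 64 : R)) in x1 xx.
have xb : x <= 64 / 55 by nra.
have x2 : x ^+ 2 <= 136 / 100 by rewrite expr2; nra.
have x4 : x ^+ 4 <= 185 / 100.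
  have -> : x ^+ 4 = x ^+ 2 * x ^+ 2 by rewrite -exprD.
  have : 0 <= x ^+ 2 by rewrite exprn_ge0 // ltW.
  nra.
rewrite e.
have -> : x ^+ 8 = x ^+ 4 * x ^+ 4 by rewrite -exprD.
have : 0 <= x ^+ 4 by rewrite exprn_ge0 // ltW.
nra.
Qed.

Lemma key_ineq (q Y : R) : 2 <= q -> 0 < Y ->
  expR (9 / 8) * powR Y q <= Y * powR (Y + 1) q.
Proof.
move=> q2 Y0.
set r := (Y + 1) / Y.
have r1 : 1 <= r by rewrite /r ler_pdivlMr // mul1r; lra.
have eY : Y + 1 = Y * r by rewrite /r mulrC divfK // lt0r_neq0.
rewrite eY powRM //; last 2 first.
- exact: ltW.
- lra.
have rq : r ^+ 2 <= powR r q.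
  rewrite -powR_mulrn; last lra.
  exact: ler_powR.
have P0 : 0 <= powR Y q by exact: powR_ge0.
have yr : 4 <= Y * r ^+ 2.
  have -> : Y * r ^+ 2 = (Y + 1) ^+ 2 / Y by rewrite /r; field; exact: lt0r_neq0.
  rewrite ler_pdivlMr // expr2; have := sqr_ge0 (Y - 1); rewrite expr2; nra.
have := e98.
have : Y * r ^+ 2 <= Y * powR r q by rewrite ler_wpM2l // ltW.
nra.
Qed.


Lemma layer (c : nat -> R) (v : R) (N : nat) : (forall n, c n <= c n.+1) ->
  Num.min v (c N) - c 0%N <= \sum_(n < N) (c n.+1 - c n) * ((c n < v)%R)%:R.
Proof.
move=> cnd; elim: N => [|N IH].
  by rewrite big_ord0 subr_le0 ge_min lexx orbT.
rewrite big_ord_recr /=.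
have cN := cnd N.
have [vN|vN] := leP v (c N).
  have : Num.min v (c N.+1) = Num.min v (c N).
    by rewrite !min_l //; apply: le_trans cN.
  move=> ->; apply: le_trans IH _; rewrite lerDl.
  by apply: mulr_ge0; [rewrite subr_ge0|rewrite ler0n].
have -> : ((true : nat)%:R : R) = 1 by []. rewrite mulr1.
have mincN : Num.min v (c N) = c N by rewrite min_r // ltW.
rewrite mincN in IH.
have : Num.min v (c N.+1) <= c N.+1 by rewrite ge_min lexx orbT.
lra.
Qed.

Lemma term_bound (q A b Z : R) : 2 <= q -> 0 <= A -> 0 <= Z ->
  (A * powR (Z + 1/16) q - A * powR Z q) * expR (b - Z) <=
  q * A * expR b * (1/16 * (powR (Z + 1/16 + 1) q * expR (- (Z + 1/16 + 1 + 1/16)))).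
Proof.
move=> q2 A0 Z0.
have h0 : 0 < (1/16 : R) by [].
have q1 : 1 <= q by lra.
have d := @diff_bound q Z (1/16) q1 Z0 h0.
have Y0 : 0 < Z + 1/16 by lra.
have k := @key_ineq q _ q2 Y0.
set Y := Z + 1/16 in d Y0 k *.
set PY := powR Y q in d k *.
set PZ := powR Z q in d *.
set P1 := powR (Y + 1) q in k *.
have e1 : expR (b - Z) = expR b * expR (- Z) by rewrite expRD.
have e2 : expR (- (Y + 1 + 1/16)) = expR (- Z) / expR (9/8).
  by rewrite -expRB; congr expR; rewrite /Y; lra.
rewrite e1 e2.
have E0 : 0 < expR (9/8 : R) by exact: expR_gt0.
have EB : 0 < expR b by exact: expR_gt0.
have EZ : 0 < expR (- Z) by exact: expR_gt0.
have t : PY / Y <= P1 / expR (9/8).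
  rewrite ler_pdivrMr // mulrAC ler_pdivlMr // mulrC [P1 * Y]mulrC //.
have s : PY - PZ <= q * (1/16) * P1 / expR (9/8).
  apply: (le_trans d).
  rewrite -!mulrA; apply: ler_wpM2l; first lra.
  rewrite !mul1r; apply: ler_wpM2l => //.
have -> : (A * PY - A * PZ) * (expR b * expR (- Z)) = (A * expR b * expR (-Z)) * (PY - PZ) by ring.
have -> : q * A * expR b * (1 / 16 * (P1 * (expR (- Z) / expR (9 / 8)))) =
  (A * expR b * expR (-Z)) * (q * (1/16) * P1 / expR (9/8)) by ring.
apply: ler_wpM2l => //.
apply: mulr_ge0; [apply: mulr_ge0 => //|]; exact: ltW.
Qed.

End RealLemmas.


Section G.
Context {R : realType}.
Definition Itv_n (c : R) (n : nat) : set R := [set` `[c + n%:R / 16, c + n.+1%:R / 16[%R].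

Lemma Itv_n_uniq (c s : R) (n k : nat) : Itv_n c n s -> Itv_n c k s -> n = k.
Proof.
rewrite /Itv_n => H1 H2; move: H1 H2.
rewrite /mkset !in_itv ![~~ true]/= !lteifT !lteifF => /andP[a1 a2] /andP[b1 b2].

have h1 : (n%:R : R) / 16 < k.+1%:R / 16 by lra.
have h2 : (k%:R : R) / 16 < n.+1%:R / 16 by lra.
have i16 : 0 < (16:R)^-1 by rewrite invr_gt0 ltr0n.
rewrite (ltr_pM2r i16) in h1; rewrite (ltr_pM2r i16) in h2.
rewrite ltr_nat in h1; rewrite ltr_nat in h2.
by apply/eqP; rewrite ltnS in h1; rewrite ltnS in h2; rewrite eqn_leq h1 h2.
Qed.

Lemma Itv_n_meas c n : measurable (Itv_n c n).
Proof. exact: measurable_itv. Qed.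


Lemma Itv_n_leb (c : R) n : lebesgue_measure (Itv_n c n) = (1/16)%:E.
Proof.
rewrite /Itv_n.
have ab : c + n%:R / 16 < c + n.+1%:R / 16.
  rewrite ltrD2l ltr_pM2r ?invr_gt0 ?ltr0n // ltr_nat //.
have ba : c + n.+1%:R / 16 - (c + n%:R / 16) = 1 / 16.
  by rewrite -natr1; field.
move: ab ba.
set a := c + n%:R / 16. set b := c + n.+1%:R / 16.
move=> ab ba.
rewrite lebesgue_measure_itv /= lte_fin ab -EFinB ba //.
Qed.

Local Open Scope ereal_scope.
Lemma gamma_lb (q c : R) (N : nat) : (0 <= q)%R -> (0 <= c)%R ->
  \sum_(n < N) (1/16 * (powR (c + n%:R/16) q * expR (- (c + n.+1%:R/16))))%:E
   <= gamma_fact q.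
Proof.
move=> q0 c0.
pose m := fun n : nat => (powR (c + n%:R/16) q * expR (- (c + n.+1%:R/16)))%R.
have m0 : forall n, (0 <= m n)%R.
  by move=> n; rewrite /m mulr_ge0 // ?powR_ge0 ?expR_ge0.
pose D : set R := `[0%R, +oo[%classic.
have mD : measurable D by exact: measurable_itv.
pose F := fun (n : 'I_N) (s : R) => (m n * \1_(Itv_n c n) s)%:E.
have mF : forall n, measurable_fun D (F n).
  move=> n; apply/measurable_EFinP; apply: measurable_funM.
    exact: measurable_cst.
  apply: measurable_indic; exact: Itv_n_meas.
have F0 : forall n x, D x -> 0 <= F n x.
  by move=> n x _; rewrite lee_fin mulr_ge0 // ?m0.
have step1 : \sum_(n < N) (1/16 * m n)%:E = \int[lebesgue_measure]_(s in D) (\sum_(n < N) F n s).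
  rewrite ge0_integral_sum //.
  apply: eq_bigr => n _.
  have kk : (m n < 0)%R -> Itv_n c n = set0.
    by move=> h; exfalso; move: (m0 n); rewrite leNgt h.
  have H := (@integralZl_indic _ _ _ lebesgue_measure D mD (fun _ => Itv_n c n) (m n) kk (Itv_n_meas c n)).
  cbv beta in H.
  rewrite /F H.
  rewrite integral_indic //; last exact: Itv_n_meas.
  have -> : Itv_n c n `&` D = Itv_n c n.
    apply/setIidPl => s; rewrite /Itv_n /D /mkset !in_itv ![~~ true]/= !lteifT !lteifF => /andP[a1 _].
    have h : (0 <= c + n%:R / 16)%R by rewrite addr_ge0 // divr_ge0 // ler0n.
    by rewrite (le_trans h a1).
  transitivity ((m n)%:E * (1/16)%:E); first by rewrite -EFinM mulrC.
  by congr (_ * _); symmetry; exact: (Itv_n_leb c n).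
rewrite /m in step1.
rewrite step1 /gamma_fact.
apply: ge0_le_integral => //.
- by move=> x Dx; rewrite sume_ge0 // => n _; exact: F0.
- by apply: emeasurable_sum => n; exact: mF.
- apply/measurable_EFinP; apply: measurable_funM.
    exact: measurable_funTS (measurable_powR _).
  apply: measurable_funTS; apply: measurableT_comp; first exact: measurable_expR.
  exact: measurable_funN.
move=> s Ds.
have f0 : (0 <= powR s q * expR (- s))%R by rewrite mulr_ge0 // ?powR_ge0 ?expR_ge0.
case: (pselect (exists k : 'I_N, Itv_n c k s)) => [[k Hk]|Hn].
  rewrite (bigD1 k) //= big1 ?adde0; last first.
    move=> i ik; rewrite /F indicE memNset ?mulr0 //.
    move=> Hi; move/negP: ik; apply; apply/eqP; apply: val_inj => /=.
    exact: Itv_n_uniq Hi Hk.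
  rewrite /F indicE mem_set // mulr1 lee_fin /m.
  move: Hk; rewrite /Itv_n /mkset !in_itv ![~~ true]/= !lteifT !lteifF => /andP[a1 a2].
  have h : (0 <= c + k%:R / 16)%R by rewrite addr_ge0 // divr_ge0 // ler0n.
  apply: ler_pM.
  - exact: powR_ge0.
  - exact: expR_ge0.
  - by apply: ge0_ler_powR => //; rewrite nnegrE //; apply: le_trans a1.
  - by rewrite ler_expR lerN2 ltW.
rewrite big1 ?lee_fin //.
move=> i _; rewrite /F indicE memNset ?mulr0 //.
by move=> Hi; apply: Hn; exists i.
Qed.
End G.


Section Main.
Context {R : realType} (d0 : measure_display) (Omega : measurableType d0)
  (Pr : probability Omega R).

Import HBNNSimple.

Lemma int_layer (c0 : R) (N : nat) (w : nat -> R) (B : nat -> set Omega) :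
  0 <= c0 -> (forall n, 0 <= w n) -> (forall n, measurable (B n)) ->
  (\int[Pr]_x (c0 + \sum_(n < N) w n * \1_(B n) x)%:E
   = c0%:E + \sum_(n < N) (w n)%:E * Pr (B n))%E.
Proof.
move=> c00 w0 mB.
have mT : measurable (setT : set Omega) by [].
under eq_integral do rewrite EFinD -sumEFin.
rewrite ge0_integralD //; last 2 first.
- by move=> x _; rewrite sume_ge0 // => n _; rewrite lee_fin mulr_ge0 // indic_ge0.
- apply: emeasurable_sum => n; apply/measurable_EFinP; apply: measurable_funM.
    exact: measurable_cst.
  exact: measurable_indic.
rewrite integral_cst //.
rewrite [X in (c0%:E * X)%E](_ : _ = 1%E); last exact: probability_setT.
rewrite mule1.
congr (_ + _)%E.
rewrite (@ge0_integral_sum _ _ _ Pr setT mT 'I_N (fun i x => (w i * \1_(B i) x)%:E)) //; last 2 first.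
- move=> n; apply/measurable_EFinP; apply: measurable_funM.
    exact: measurable_cst.
  exact: measurable_indic.
- by move=> n x _; rewrite lee_fin mulr_ge0 // indic_ge0.
apply: eq_bigr => n _.
have kk : (w n < 0)%R -> B n = set0.
  by move=> h; exfalso; move: (w0 n); rewrite leNgt h.
have H := (@integralZl_indic _ _ _ Pr setT mT (fun _ => B n) (w n) kk (mB n)).
cbv beta in H.
by rewrite H integral_indic // setIT.
Qed.

Lemma tail_integral_bound (f : Omega -> R) (A b q : R) :
  (forall w, 0 <= f w) -> 0 < A -> 2 <= q ->
  (forall y, 0 <= y -> b < y -> exists E, measurable E /\
      ((1 - expR (b - y))%:E <= Pr E)%E /\ forall w, E w -> f w <= A * powR y q) ->
  (\int[Pr]_w (f w)%:E <= (A * powR (Num.max b 0) q)%:E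
     + (q * A * expR b)%:E * gamma_fact q)%E.
Proof.
move=> f0 A0 q2 Htail.
rewrite ge0_integralTE; last by move=> w; rewrite lee_fin.
apply: ge_ereal_sup => _ [g /= Hg <-].
set be := Num.max b 0.
have be0 : 0 <= be by rewrite le_max lexx orbT.
have bbe : b <= be by rewrite le_max lexx.
pose Y n := be + n%:R / 16.
pose c n := A * powR (Y n) q.
have Y0 : forall n, 0 <= Y n by move=> n; rewrite /Y addr_ge0 // divr_ge0 // ler0n.
have YS : forall n, Y n.+1 = Y n + 1/16 by move=> n; rewrite /Y -natr1; field.
have cnd : forall n, c n <= c n.+1.
  move=> n; rewrite /c ler_wpM2l //; first exact: ltW.
  apply: ge0_ler_powR; [lra| rewrite nnegrE //| rewrite nnegrE //|].
  rewrite YS; lra.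
have [M [_ HM]] := simple_bounded g.
set M1 := Num.max M 0 + 1.
have gM : forall w, g w <= M1.
  move=> w.
  have hM : M <= Num.max M 0 by rewrite le_max lexx.
  have h : M < M1 by rewrite /M1; lra.
  have h2 := HM M1 h w I.
  apply: le_trans h2; exact: ler_norm.
have M10 : 0 <= M1.
  have : 0 <= Num.max M 0 by rewrite le_max lexx orbT.
  rewrite /M1; lra.
pose x := 16 * (1 + M1 / A).
have x0 : 0 <= x by rewrite /x mulr_ge0 // addr_ge0 // divr_ge0 // ltW.
pose N := Num.bound x.
have xN := archi_boundP x0.
have cN : M1 <= c N.
  have hYN : 1 + M1 / A <= Y N.
    rewrite /Y /N; move: xN; rewrite /x => xN; lra.
  have Y1 : 1 <= Y N by have := divr_ge0 M10 (ltW A0); lra.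
  have : Y N <= powR (Y N) q.
    by rewrite -{1}(powRr1 (le_trans ler01 Y1)); apply: ler_powR => //; lra.
  rewrite /c => h.
  have : A * (1 + M1 / A) <= A * powR (Y N) q by rewrite ler_wpM2l ?(ltW A0) //; lra.
  have -> : A * (1 + M1 / A) = A + M1 by field; exact: lt0r_neq0.
  lra.
pose An n := [set w | c n < g w].
have mAn : forall n, measurable (An n).
  move=> n.
  have h := (@measurable_funPT _ _ _ _ g) measurableT _ (measurable_itv `]c n, +oo[).
  rewrite set_itvoy setTI in h; exact: h.
have Hpt : forall w, ((g w)%:E <= (c 0%N + \sum_(n < N) (c n.+1 - c n) * \1_(An n) w)%:E)%E.
  move=> w; rewrite lee_fin.
  have := @layer R c (g w) N cnd.
  rewrite min_l; last exact: le_trans (gM w) cN.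
  have -> : \sum_(n < N) (c n.+1 - c n) * \1_(An n) w = \sum_(n < N) (c n.+1 - c n) * ((c n < g w)%R)%:R.
    apply: eq_bigr => n _; rewrite indicE.
    case: (boolP (c n < g w)) => h.
      by rewrite mem_set.
    by rewrite memNset //; apply/negP.
  lra.
have -> : sintegral Pr g = (\int[Pr]_w (g w)%:E)%E by rewrite integral_nnsfun // patch_setT.
have Hpt' : forall w, setT w -> ((g w)%:E <= (c 0%N + \sum_(n < N) (c n.+1 - c n) * \1_(An n) w)%:E)%E.
  by move=> w _; exact: Hpt.
have g0 : forall w, setT w -> (0 <= (g w)%:E)%E by move=> w _; rewrite lee_fin.
have mg : measurable_fun setT (fun w => (g w)%:E).
  by apply/measurable_EFinP; exact: measurable_funPT.
have mb : measurable_fun setT (fun w => (c 0%N + \sum_(n < N) (c n.+1 - c n) * \1_(An n) w)%:E).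
  apply/measurable_EFinP; apply: measurable_funD; first exact: measurable_cst.
  apply: measurable_sum => n; apply: measurable_funM; first exact: measurable_cst.
  exact: measurable_indic.
apply: (le_trans (@ge0_le_integral _ _ _ Pr setT measurableT _ _ g0 mg mb Hpt')).
rewrite (@int_layer (c 0%N) N (fun n => c n.+1 - c n) An) //; last 2 first.
- by rewrite /c mulr_ge0 ?powR_ge0 // ltW.
- by move=> n; rewrite subr_ge0.
have PB : forall n, (Pr (An n) <= (expR (b - Y n))%:E)%E.
  move=> n; case: (ltP b (Y n)) => hb.
    have [E [mE [PE HE]]] := Htail (Y n) (Y0 n) hb.
    have sub : An n `<=` ~` E.
      move=> w hw Ew; have h1 := HE w Ew; have h2 := Hg w.
      rewrite lee_fin in h2; rewrite /An /c /mkset in hw; lra.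
    have h3 := le_measure Pr (mem_set (mAn n)) (mem_set (measurableC mE)) sub.
    apply: (le_trans h3).
    rewrite [X in (X <= _)%E](_ : _ = (1 - Pr E)%E); last exact: probability_setC.
    have P1 := probability_le1 Pr mE.
    have P0 : (0 <= Pr E)%E by exact: measure_ge0.
    move: PE P1 P0; case: (Pr E) => [r| |] //=; rewrite ?lee_fin => PE P1 P0.
    lra.
  apply: le_trans (probability_le1 Pr (mAn n)) _.
  rewrite lee_fin; have := expR_ge1Dx (b - Y n); lra.
have Yz : Y 0%N = be by rewrite /Y (_ : 0%:R = 0 :> R) // mul0r addr0.
have c00 : c 0%N = A * powR be q by rewrite /c Yz.
apply: leeD; first by rewrite c00.
set K := q * A * expR b.
have K0 : 0 <= K by rewrite /K mulr_ge0 ?expR_ge0 // mulr_ge0 //; lra.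
pose cc := be + 1 + 1/16.
have cc0 : 0 <= cc by rewrite /cc; lra.
apply: (@le_trans _ _ (\sum_(n < N) (K * (1/16 * (powR (cc + n%:R/16) q * expR (- (cc + n.+1%:R/16)))))%:E)%E).
  apply: lee_sum => n _.
  apply: (@le_trans _ _ ((c n.+1 - c n) * expR (b - Y n))%:E).
    rewrite EFinM; apply: lee_wpmul2l; last exact: PB.
    by rewrite lee_fin subr_ge0; exact: cnd.
  rewrite lee_fin.
  have tb := @term_bound R q A b (Y n) q2 (ltW A0) (Y0 n).
  have e1 : Y n + 1/16 + 1 = cc + n%:R/16 by rewrite /Y /cc; lra.
  have e2 : Y n + 1/16 + 1 + 1/16 = cc + n.+1%:R/16.
    by rewrite /Y /cc -natr1; lra.
  rewrite e2 e1 in tb.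
  by rewrite /c YS.
under eq_bigr do rewrite EFinM.
rewrite -ge0_sume_distrr; last first.
  move=> n _; rewrite lee_fin mulr_ge0 // mulr_ge0 ?powR_ge0 ?expR_ge0 //.
apply: lee_wpmul2l; first by rewrite lee_fin.
apply: gamma_lb => //; lra.
Qed.

Lemma zero_bound (f : Omega -> R) (b : R) : (forall w, 0 <= f w) ->
  (forall y, 0 <= y -> b < y -> exists E, measurable E /\
      ((1 - expR (b - y))%:E <= Pr E)%E /\ forall w, E w -> f w <= 0) ->
  (\int[Pr]_w (f w)%:E <= 0)%E.
Proof.
move=> f0 Htail.
rewrite ge0_integralTE; last by move=> w; rewrite lee_fin.
apply: ge_ereal_sup => _ [g /= Hg <-].
set be := Num.max b 0.
have be0 : 0 <= be by rewrite le_max lexx orbT.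
have bbe : b <= be by rewrite le_max lexx.
have [M [_ HM]] := simple_bounded g.
set M1 := Num.max M 0 + 1.
have gM : forall w, g w <= M1.
  move=> w.
  have hM : M <= Num.max M 0 by rewrite le_max lexx.
  have h : M < M1 by rewrite /M1; lra.
  have h2 := HM M1 h w I.
  apply: le_trans h2; exact: ler_norm.
have M11 : 1 <= M1.
  have : 0 <= Num.max M 0 by rewrite le_max lexx orbT.
  rewrite /M1; lra.
have -> : sintegral Pr g = (\int[Pr]_w (g w)%:E)%E by rewrite integral_nnsfun // patch_setT.
have Hy : forall y, 0 <= y -> b < y -> (\int[Pr]_w (g w)%:E <= (M1 * expR (b - y))%:E)%E.
  move=> y y0 yb.
  have [E [mE [PE HE]]] := Htail y y0 yb.
  have mCE := measurableC mE.
  have Hpt : forall w, setT w -> ((g w)%:E <= (M1 * \1_(~` E) w)%:E)%E.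
    move=> w _; rewrite lee_fin indicE.
    case: (pselect (E w)) => Ew.
      rewrite memNset; last by move=> /(_ Ew).
      have h1 := HE w Ew; have h2 := Hg w; rewrite lee_fin in h2.
      rewrite mulr0; lra.
    by rewrite mem_set // mulr1.
  have g0 : forall w, setT w -> (0 <= (g w)%:E)%E by move=> w _; rewrite lee_fin.
  have mg : measurable_fun setT (fun w => (g w)%:E).
    by apply/measurable_EFinP; exact: measurable_funPT.
  have mb : measurable_fun setT (fun w => (M1 * \1_(~` E) w)%:E).
    apply/measurable_EFinP; apply: measurable_funM; first exact: measurable_cst.
    exact: measurable_indic.
  apply: (le_trans (@ge0_le_integral _ _ _ Pr setT measurableT _ _ g0 mg mb Hpt)).
  have kk : (M1 < 0)%R -> ~` E = set0 by move=> h; exfalso; lra.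
  have H := (@integralZl_indic _ _ _ Pr setT measurableT (fun _ => ~` E) M1 kk mCE).
  cbv beta in H.
  rewrite H integral_indic // setIT.
  rewrite [X in (_ * X <= _)%E](_ : _ = (1 - Pr E)%E); last exact: probability_setC.
  have P1 := probability_le1 Pr mE.
  have P0 : (0 <= Pr E)%E by exact: measure_ge0.
  move: PE P1 P0; case: (Pr E) => [r| |] //=; rewrite ?lee_fin => PE P1 P0.
  rewrite ler_wpM2l //; lra.
have I0 : (0 <= \int[Pr]_w (g w)%:E)%E by apply: integral_ge0 => w _; rewrite lee_fin.
have I1 : (\int[Pr]_w (g w)%:E <= M1%:E)%E.
  have Hb := Hy (be + 1) (ltac:(lra)) (ltac:(lra)).
  apply: le_trans Hb _.
  rewrite lee_fin.
  have : expR (b - (be + 1)) <= 1 by rewrite expR_le1; lra.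
  nra.
move: I0 I1 Hy; case: (\int[Pr]_w (g w)%:E)%E => [r| |] //=; rewrite ?lee_fin => I0 I1 Hy.
rewrite leNgt; apply/negP => r0.
pose y := be + 1 + M1 / r.
have Mr : 0 <= M1 / r by rewrite divr_ge0 //; lra.
have := Hy y (ltac:(rewrite /y; lra)) (ltac:(rewrite /y; lra)).
rewrite lee_fin => hy.
have e1 := expR_ge1Dx (y - b).
have e2 : expR (b - y) * expR (y - b) = 1 by rewrite -expRD (_ : b - y + (y - b) = 0) ?expR0 //; lra.
have : M1 < r * expR (y - b).
  have : M1 / r < y - b by rewrite /y; lra.
  rewrite ltr_pdivrMr // => h; nra.
have ep := expR_gt0 (b - y).
nra.
Qed.

End Main.

Theorem corollary1
  (R : realType) (d : nat)
  (d0 : measure_display) (Omega : measurableType d0) (Pr : probability Omega R)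
  (dY : measure_display) (Y : measurableType dY)
  (P : R.-pker Y ~> Y) (Yc : nat -> Omega -> Y)
  (HPmc : markov_chain Pr Yc P)
  (dYst : probability Y R)
  (* (A1) *)
  (A1_stat : stationary P dYst)
  (A1_uniq : forall mu : probability Y R, stationary P mu ->
               forall B, measurable B -> mu B = dYst B)
  (A1_mix : exists (rho CA : R), 0 <= rho < 1 /\
      forall (y : Y) (n : nat) (B : set Y), measurable B ->
        (`| nstep P n y B - dYst B | <= (CA * rho ^+ n)%:E)%E)
  (nrm : 'rV[R]_d -> R) (Hnrm : is_norm nrm)
  (H : 'rV[R]_d -> Y -> 'rV[R]_d)
  (HHmeas : forall w (i : 'I_d), measurable_fun setT (fun y => H w y 0 i))
  (h : 'rV[R]_d -> 'rV[R]_d)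
  (Hh : forall w, h w = \row_(i < d) Rintegral dYst setT (fun y => H w y 0 i))
  (* (A2) *)
  (kappa : R) (Hkappa : 0 <= kappa < 1)
  (A2 : forall w w', nrm (h w - h w') <= kappa * nrm (w - w'))
  (wstar : 'rV[R]_d) (Hwstar : h wstar = wstar)
  (Hwstar_uniq : forall w, h w = w -> w = wstar)
  (* (A3) *)
  (Lh : R)
  (A3_lip : forall w w' y, nrm (H w y - H w' y) <= Lh * nrm (w - w'))
  (A3_bnd : exists M : R, forall y, nrm (H 0 y) <= M)
  (* algorithm *)
  (w0 : 'rV[R]_d) (nu Calpha Cbar : R)
  (Hnu : 0 < nu < 1) (HCalpha : 0 < Calpha) (HCbar : Cbar <= Calpha)
  (C C' : R) (K : nat) (HK : (0 < K)%N)
  (Hconc : forall delta : R, 0 < delta < 1 ->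
     exists E : set Omega, measurable E /\ ((1 - delta)%:E <= Pr E)%E /\
       forall om, E om -> forall t : nat,
         nrm (sa_iter H (step_size Calpha nu) w0 (fun s => Yc s om) t - wstar) ^+ 2
         <= a_fun C nu t * (ln (1 / delta) + b_fun C' nu t) ^+ K)
  (p : R) (Hp : 2 <= p) (t : nat) :
  (\int[Pr]_om (powR (nrm (sa_iter H (step_size Calpha nu) w0 (fun s => Yc s om) t
                             - wstar)) (2 * p))%:E
   <= (powR (a_fun C nu t * b_fun C' nu t ^+ K) p)%:E
      + (K%:R * p * powR (a_fun C nu t) p * expR (b_fun C' nu t))%:E
        * gamma_fact (K%:R * p))%E.
Proof.
set a := a_fun C nu t.
set bb := b_fun C' nu t.
set X := fun om => nrm (sa_iter H (step_size Calpha nu) w0 (fun s => Yc s om) t - wstar).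
have X0 : forall om, 0 <= X om by move=> om; case: Hnrm => hh _ _ _; exact: hh.
have p0 : 0 <= p by lra.
have fE : forall om, powR (X om) (2 * p) = powR (X om ^+ 2) p.
  by move=> om; rewrite powRrM -powR_mulrn //.
have K1 : 1 <= (K%:R : R) by rewrite ler1n.
have Htail0 : forall y, 0 <= y -> bb < y -> exists E : set Omega, measurable E /\
    ((1 - expR (bb - y))%:E <= Pr E)%E /\ forall om, E om -> X om ^+ 2 <= a * y ^+ K.
  move=> y y0 yb.
  have d01 : 0 < expR (bb - y) < 1 by rewrite expR_gt0 /= expR_lt1; lra.
  have [E [mE [PE HE]]] := Hconc _ d01.
  exists E; split => //; split => // om Eom.
  have := HE om Eom t.
  have -> : ln (1 / expR (bb - y)) + b_fun C' nu t = y.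
    by rewrite div1r -expRN expRK -/bb; lra.
  by [].
have f0 : forall om, 0 <= powR (X om) (2 * p) by move=> om; exact: powR_ge0.
have G0 : (0 <= gamma_fact (K%:R * p))%E.
  by apply: integral_ge0 => s _; rewrite lee_fin mulr_ge0 ?powR_ge0 ?expR_ge0.
have [a0|a0] := leP a 0.
  apply: (@le_trans _ _ 0%E).
    apply: (@zero_bound R d0 Omega Pr (fun om => powR (X om) (2 * p)) bb f0).
    move=> y y0 yb; have [E [mE [PE HE]]] := Htail0 y y0 yb.
    exists E; split => //; split => // om Eom.
    have h1 := HE om Eom.
    have yK : 0 <= y ^+ K by rewrite exprn_ge0.
    have h2 : X om ^+ 2 <= 0 by nra.
    have h3 : X om ^+ 2 = 0 by apply/eqP; rewrite eq_le h2 sqr_ge0.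
    rewrite fE h3 powR0 //; lra.
  apply: adde_ge0; first by rewrite lee_fin powR_ge0.
  apply: mule_ge0 => //; rewrite lee_fin.
  rewrite mulr_ge0 ?expR_ge0 // mulr_ge0 ?powR_ge0 // mulr_ge0 //; lra.
have A0 : 0 < powR a p by rewrite powR_gt0.
have q2 : 2 <= K%:R * p by nra.
apply: le_trans.
  apply: (@tail_integral_bound R d0 Omega Pr (fun om => powR (X om) (2 * p)) (powR a p) bb (K%:R * p) f0 A0 q2).
  move=> y y0 yb; have [E [mE [PE HE]]] := Htail0 y y0 yb.
  exists E; split => //; split => // om Eom.
  rewrite fE powRrM powR_mulrn // -powRM; [|exact: ltW|exact: exprn_ge0].
  apply: ge0_ler_powR => //; rewrite ?nnegrE ?sqr_ge0 //.
    by rewrite mulr_ge0 ?exprn_ge0 // ltW.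
  exact: HE.
apply: leeD => //.
rewrite lee_fin.
have [b0|b0] := leP 0 bb.
  rewrite powRM ?exprn_ge0 //; last exact: ltW.
  by rewrite -powR_mulrn // -powRrM.
rewrite powR0; last by apply/negP => /eqP hh; lra.
by rewrite mulr0 powR_ge0.
Qed.
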